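(* For every integer $q\ge2$, the formal codegrees $(\mathfrak{c}_s)$ of the interpolated fusion ring $\mathcal{R}_q$ satisfy $2\sum_s\frac{1}{\mathfrak{c}_s^2}\le1+\frac{1}{\mathfrak{c}_{C_0}}$, where $C_0$ is the first column of the table (so $\mathfrak{c}_{C_0}=\mathrm{FPdim}(\mathcal{R}_q)$).
   Context: $\zeta_n=\exp(2\pi i/n)$. For integer $q\ge2$, $\mathcal{R}_q$ is the commutative fusion ring whose basis is the set of rows of the formal table $T_q=(\lambda_{x,s})$ below, with eigentable $T_q$ and structure constants $N_{x,y}^z=\sum_s\lambda_{x,s}\lambda_{y,s}\overline{\lambda_{z,s}}/\mathfrak{c}_s$, where the formal codegrees are $\mathfrak{c}_s=\sum_x|\lambda_{x,s}|^2$. Table $T_q$ (rows $x_{d,c}$; entries listed in the column order given): Case $q$ even. Columns: $C_0$; $C_1$; $A_k$ ($1\le k\le\frac{q-2}{2}$); $B_k$ ($1\le k\le\frac q2$). Rows: $x_{1,1}$: $1,1,1,1$. $x_{q-1,c}$ ($1\le c\le \frac q2$): $q-1,\,-1,\,0,\,-\zeta_{q+1}^{kc}-\zeta_{q+1}^{-kc}$. $x_{q,1}$: $q,0,1,-1$. $x_{q+1,c}$ ($1\le c\le\frac{q-2}{2}$): $q+1,\,1,\,\zeta_{q-1}^{kc}+\zeta_{q-1}^{-kc},\,0$. Case $q\equiv-1\pmod 4$. Columns: $C_0$; $D_k$ ($k\in\{1,2\}$); $A_k$ ($1\le k\le\frac{q-3}{4}$); $B_k$ ($1\le k\le\frac{q-3}{4}$);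 $E$ (with $k=\frac{q+1}{4}$). Rows: $x_{1,1}$: all $1$. $x_{\frac{q-1}{2},c}$ ($c\in\{1,2\}$): $\frac{q-1}2,\ \frac{-1+i(-1)^{k+c}\sqrt q}{2},\ 0,\ (-1)^{k+1},\ (-1)^{k+1}$. $x_{q-1,c}$ ($1\le c\le\frac{q-3}4$): $q-1,\,-1,\,0,\,-\zeta_{q+1}^{2kc}-\zeta_{q+1}^{-2kc},\,-2(-1)^c$. $x_{q,1}$: $q,0,1,-1,-1$. $x_{q+1,c}$ ($1\le c\le\frac{q-3}4$): $q+1,\,1,\,\zeta_{q-1}^{2kc}+\zeta_{q-1}^{-2kc},\,0,\,0$. Case $q\equiv1\pmod4$. Columns: $C_0$; $D_k$ ($k\in\{1,2\}$); $A_k$ ($1\le k\le\frac{q-5}4$); $E$ (with $k=\frac{q-1}4$); $B_k$ ($1\le k\le\frac{q-1}4$). Rows: $x_{1,1}$: all $1$. $x_{\frac{q+1}2,c}$ ($c\in\{1,2\}$): $\frac{q+1}2,\ \frac{1+(-1)^{k+c}\sqrt q}{2},\ (-1)^k,\ (-1)^k,\ 0$. $x_{q-1,c}$ ($1\le c\le\frac{q-1}4$): $q-1,\,-1,\,0,\,0,\,-\zeta_{q+1}^{2kc}-\zeta_{q+1}^{-2kc}$. $x_{q,1}$: $q,0,1,1,-1$. $x_{q+1,c}$ ($1\le c\le\frac{q-5}4$): $q+1,\,1,\,\zeta_{q-1}^{2kc}+\zeta_{q-1}^{-2kc},\,2(-1)^c,\,0$. *)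

(* Defs.v *)
From HB Require Import structures.
From mathcomp Require Import all_boot all_order all_algebra.
From mathcomp Require Import reals trigo.
From mathcomp Require Import complex.
Set Implicit Arguments. Unset Strict Implicit. Unset Printing Implicit Defensive.
Import Order.TTheory GRing.Theory Num.Theory.
Local Open Scope ring_scope.
Local Open Scope complex_scope.

Section FusionTable.
Variable R : realType.
Local Notation C := R[i].

Definition zeta (n : nat) : C := (cos (pi *+ 2 / n%:R) +i* sin (pi *+ 2 / n%:R)).

Definition cs (n m : nat) : C := zeta n ^+ m + zeta n ^- m.

Definition fam (n : nat) (f : nat -> C) : seq C := [seq f c | c <- iota 1 n].

Definition sgn (n : nat) : C := (-1) ^+ n.

(* A column of T_q is the list of its entries in the row order
   x_{1,1}, <first family>, <second family>, x_{q,1}, <third family>. *)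

(* rows: x_{1,1}; x_{q-1,c} (1<=c<=q/2); x_{q,1}; x_{q+1,c} (1<=c<=(q-2)/2) *)
Definition col_even (q : nat) (a : C) (f : nat -> C) (b : C) (g : nat -> C) : seq C :=
  a :: fam (q %/ 2) f ++ b :: fam ((q - 2) %/ 2) g.

Definition table_even (q : nat) : seq (seq C) :=
  let qC := (q%:R : C) in
  [:: col_even q 1 (fun _ => qC - 1) qC (fun _ => qC + 1)  (* C_0 *)
    ; col_even q 1 (fun _ => -1) 0 (fun _ => 1) ]           (* C_1 *)
  ++ [seq col_even q 1 (fun _ => 0) 1 (fun c => cs (q - 1) (k * c))
       | k <- iota 1 ((q - 2) %/ 2)]                         (* A_k *)
  ++ [seq col_even q 1 (fun c => - cs (q + 1) (k * c)) (-1) (fun _ => 0)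
       | k <- iota 1 (q %/ 2)].                              (* B_k *)

(* rows: x_{1,1}; x_{(q-1)/2,c} (c in {1,2}); x_{q-1,c} (1<=c<=(q-3)/4);
         x_{q,1}; x_{q+1,c} (1<=c<=(q-3)/4) *)
Definition col_m1 (q : nat) (a : C) (h f : nat -> C) (b : C) (g : nat -> C) : seq C :=
  a :: fam 2 h ++ fam ((q - 3) %/ 4) f ++ b :: fam ((q - 3) %/ 4) g.

Definition table_m1 (q : nat) : seq (seq C) :=
  let qC := (q%:R : C) in
  let m := ((q - 3) %/ 4)%N in
  let kE := ((q + 1) %/ 4)%N in
  [:: col_m1 q 1 (fun _ => (qC - 1) / 2) (fun _ => qC - 1) qC (fun _ => qC + 1)] (* C_0 *)
  ++ [seq col_m1 q 1 (fun c => (-1 + 'i * sgn (k + c) * sqrtC qC) / 2)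
          (fun _ => -1) 0 (fun _ => 1) | k <- iota 1 2]                          (* D_k *)
  ++ [seq col_m1 q 1 (fun _ => 0) (fun _ => 0) 1 (fun c => cs (q - 1) (2 * k * c))
       | k <- iota 1 m]                                                           (* A_k *)
  ++ [seq col_m1 q 1 (fun _ => sgn (k + 1)) (fun c => - cs (q + 1) (2 * k * c))
          (-1) (fun _ => 0) | k <- iota 1 m]                                      (* B_k *)
  ++ [:: col_m1 q 1 (fun _ => sgn (kE + 1)) (fun c => - (2 * sgn c)) (-1)
          (fun _ => 0)].                                                          (* E *)

(* rows: x_{1,1}; x_{(q+1)/2,c} (c in {1,2}); x_{q-1,c} (1<=c<=(q-1)/4);
         x_{q,1}; x_{q+1,c} (1<=c<=(q-5)/4) *)
Definition col_p1 (q : nat) (a : C) (h f : nat -> C) (b : C) (g : nat -> C) : seq C :=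
  a :: fam 2 h ++ fam ((q - 1) %/ 4) f ++ b :: fam ((q - 5) %/ 4) g.

Definition table_p1 (q : nat) : seq (seq C) :=
  let qC := (q%:R : C) in
  let kE := ((q - 1) %/ 4)%N in
  [:: col_p1 q 1 (fun _ => (qC + 1) / 2) (fun _ => qC - 1) qC (fun _ => qC + 1)] (* C_0 *)
  ++ [seq col_p1 q 1 (fun c => (1 + sgn (k + c) * sqrtC qC) / 2)
          (fun _ => -1) 0 (fun _ => 1) | k <- iota 1 2]                          (* D_k *)
  ++ [seq col_p1 q 1 (fun _ => sgn k) (fun _ => 0) 1 (fun c => cs (q - 1) (2 * k * c))
       | k <- iota 1 ((q - 5) %/ 4)]                                              (* A_k *)
  ++ [:: col_p1 q 1 (fun _ => sgn kE) (fun _ => 0) 1 (fun c => 2 * sgn c)]        (* E *)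
  ++ [seq col_p1 q 1 (fun _ => 0) (fun c => - cs (q + 1) (2 * k * c)) (-1)
          (fun _ => 0) | k <- iota 1 ((q - 1) %/ 4)].                             (* B_k *)

(* The formal table T_q, as the list of its columns (first column C_0). *)
Definition table (q : nat) : seq (seq C) :=
  if ~~ odd q then table_even q
  else if (q %% 4 == 3)%N then table_m1 q else table_p1 q.

Definition codegree (col : seq C) : C := \sum_(x <- col) `|x| ^+ 2.

End FusionTable.

(* Main.v *)
Require Import Defs.
From HB Require Import structures.
From mathcomp Require Import all_boot all_order all_algebra.
From mathcomp Require Import reals trigo.
From mathcomp Require Import complex.
From mathcomp Require Import ring lra zify.
Import Order.TTheory GRing.Theory Num.Theory.
Local Open Scope ring_scope.
Local Open Scope complex_scope.

Section F.
Variable R : realFieldType.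

Lemma divle (a b c : R) : 0 < b -> a <= c * b -> a / b <= c.
Proof. by move=> b0 h; rewrite ler_pdivrMr. Qed.

Lemma invle (b c : R) : 0 < b -> 1 <= c * b -> b^-1 <= c.
Proof. by move=> b0 h; rewrite -div1r divle. Qed.

Lemma c0bound (c : R) : 2 <= c -> 2 * c ^- 2 <= c^-1.
Proof.
move=> h.
have c0 : 0 < c by lra.
have u0 : 0 < c^-1 by rewrite invr_gt0.
have u1 : c^-1 <= 2^-1 by rewrite lef_pV2 ?posrE //; lra.
rewrite -exprVn expr2; nra.
Qed.

Lemma final_even (x : R) : (x == 1) || (2 <= x) ->
  2 *
  ((1 + x * (2 * x - 1) ^+ 2 +
    ((2 * x) ^+ 2 + (x - 1) * (2 * x + 1) ^+ 2))
   ^- 2 +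
   ((1 + x * 1 + (0 + (x - 1) * 1)) ^- 2 +
    ((x - 1) / (x *+ 2 - 1) ^+ 2 + x / (x *+ 2 + 1) ^+ 2))) <=
  1 +
  (1 + x * (2 * x - 1) ^+ 2 +
   ((2 * x) ^+ 2 + (x - 1) * (2 * x + 1) ^+ 2))^-1.
Proof.
move=> hx.
have x1 : 1 <= x by case/orP: hx => [/eqP -> //|]; lra.
set c0 := 1 + _ + _.
have hc : 2 <= c0.
  have : 0 <= x * (2 * x - 1) ^+ 2 by apply: mulr_ge0; [lra| apply: sqr_ge0].
  have : 0 <= (x - 1) * (2 * x + 1) ^+ 2 by apply: mulr_ge0; [lra| apply: sqr_ge0].
  rewrite /c0; nra.
have := @c0bound c0 hc.
have -> : 1 + x * 1 + (0 + (x - 1) * 1) = 2 * x by ring.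
have e2 : x *+ 2 = 2 * x by rewrite mulr_natl.
rewrite !e2.
suff : (2 * x) ^- 2 + ((x - 1) / (2 * x - 1) ^+ 2 + x / (2 * x + 1) ^+ 2) <= 2^-1 by lra.
case/orP: hx => [/eqP ->|x2].
  rewrite (_ : 1 - 1 = 0 :> R); last by ring.
  rewrite mul0r add0r mulr1 (_ : 1 + 1 + 1 = 3 :> R); last by ring.
  rewrite -exprVn.
  have -> : (2 : R)^-1 ^+ 2 = 4^-1 by rewrite exprVn; congr (_^-1); ring.
  rewrite (_ : 1 / 3 ^+ 2 = (9 : R)^-1); last by rewrite div1r; congr (_^-1); ring.
  have h4 : (4 : R)^-1 = 1/4 by rewrite div1r.
  have h9 : (9 : R)^-1 = 1/9 by rewrite div1r.
  have h2 : (2 : R)^-1 = 1/2 by rewrite div1r.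
  rewrite h4 h9 h2; lra.
have b1 : (2 * x) ^- 2 <= 1/16.
  apply: invle; first by rewrite exprn_gt0 //; lra.
  nra.
have b2 : (x - 1) / (2 * x - 1) ^+ 2 <= 1/8.
  apply: divle; first by rewrite exprn_gt0 //; lra.
  nra.
have b3 : x / (2 * x + 1) ^+ 2 <= 1/8.
  apply: divle; first by rewrite exprn_gt0 //; lra.
  nra.
have h2 : (2 : R)^-1 = 1/2 by rewrite div1r.
rewrite h2; lra.
Qed.

Lemma final_m1 (x : R) : (x == 0) || (1 <= x) ->
  2 *
  ((1 + ((4 * x + 3 - 1) ^+ 2 / 4 + (4 * x + 3 - 1) ^+ 2 / 4) +
    x * (4 * x + 3 - 1) ^+ 2 +
    ((4 * x + 3) ^+ 2 + x * (4 * x + 3 + 1) ^+ 2))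
   ^- 2 +
   ((1 + ((1 + (4 * x + 3)) / 4 + (1 + (4 * x + 3)) / 4) + x * 1 +
     (0 + x * 1))
    ^- 2 +
    ((1 + ((1 + (4 * x + 3)) / 4 + (1 + (4 * x + 3)) / 4) + x * 1 +
      (0 + x * 1))
     ^- 2 +
     (x / (x *+ 2 + 1) ^+ 2 +
      (x / (x *+ 2 + 2) ^+ 2 +
       (1 + (1 + 1) + x * 4 + (1 + x * 0)) ^- 2))))) <=
  1 +
  (1 + ((4 * x + 3 - 1) ^+ 2 / 4 + (4 * x + 3 - 1) ^+ 2 / 4) +
   x * (4 * x + 3 - 1) ^+ 2 +
   ((4 * x + 3) ^+ 2 + x * (4 * x + 3 + 1) ^+ 2))^-1.
Proof.
move=> hx.
have x0 : 0 <= x by case/orP: hx => [/eqP -> //|]; lra.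
set c0 := (X in _ <= 1 + X^-1).
have hc : 2 <= c0.
  have : 0 <= x * (4 * x + 3 - 1) ^+ 2 by apply: mulr_ge0; [lra| apply: sqr_ge0].
  have : 0 <= x * (4 * x + 3 + 1) ^+ 2 by apply: mulr_ge0; [lra| apply: sqr_ge0].
  have : 0 <= (4 * x + 3 - 1) ^+ 2 / 4 by apply: divr_ge0; [apply: sqr_ge0|lra].
  rewrite /c0; nra.
have := @c0bound c0 hc.
have -> : 1 + ((1 + (4 * x + 3)) / 4 + (1 + (4 * x + 3)) / 4) + x * 1 + (0 + x * 1) = 4 * x + 3.
  by field.
have -> : 1 + (1 + 1) + x * 4 + (1 + x * 0) = 4 * x + 4 by ring.
have e2 : x *+ 2 = 2 * x by rewrite mulr_natl.
rewrite !e2.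
suff : (4 * x + 3) ^- 2 + ((4 * x + 3) ^- 2 + (x / (2 * x + 1) ^+ 2 + (x / (2 * x + 2) ^+ 2 + (4 * x + 4) ^- 2))) <= 2^-1 by lra.
have h2 : (2 : R)^-1 = 1/2 by rewrite div1r.
case/orP: hx => [/eqP ->|x1].
  rewrite !mul0r !mulr0 !add0r.
  have -> : ((3 : R) ^+ 2)^-1 = 1/9 by rewrite div1r; congr (_^-1); ring.
  have -> : ((4 : R) ^+ 2)^-1 = 1/16 by rewrite div1r; congr (_^-1); ring.
  rewrite h2; lra.
have b1 : (4 * x + 3) ^- 2 <= 1/49.
  apply: invle; first by rewrite exprn_gt0 //; lra.
  nra.
have b2 : x / (2 * x + 1) ^+ 2 <= 1/8.
  apply: divle; first by rewrite exprn_gt0 //; lra.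
  nra.
have b3 : x / (2 * x + 2) ^+ 2 <= 1/8.
  apply: divle; first by rewrite exprn_gt0 //; lra.
  nra.
have b4 : (4 * x + 4) ^- 2 <= 1/64.
  apply: invle; first by rewrite exprn_gt0 //; lra.
  nra.
rewrite h2; lra.
Qed.

Lemma final_p1 (x : R) : 1 <= x ->
  2 *
  ((1 + ((4 * x + 1 + 1) ^+ 2 / 4 + (4 * x + 1 + 1) ^+ 2 / 4) +
    x * (4 * x + 1 - 1) ^+ 2 +
    ((4 * x + 1) ^+ 2 + (x - 1) * (4 * x + 1 + 1) ^+ 2))
   ^- 2 +
   ((1 + (2 + 2 * (4 * x + 1)) / 4 + x * 1 + (0 + (x - 1) * 1)) ^- 2 +
    ((1 + (2 + 2 * (4 * x + 1)) / 4 + x * 1 + (0 + (x - 1) * 1))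
     ^- 2 +
     ((x - 1) / (x *+ 2) ^+ 2 +
      ((1 + (1 + 1) + x * 0 + (1 + (x - 1) * 4)) ^- 2 +
       x / (x *+ 2 + 1) ^+ 2))))) <=
  1 +
  (1 + ((4 * x + 1 + 1) ^+ 2 / 4 + (4 * x + 1 + 1) ^+ 2 / 4) +
   x * (4 * x + 1 - 1) ^+ 2 +
   ((4 * x + 1) ^+ 2 + (x - 1) * (4 * x + 1 + 1) ^+ 2))^-1.
Proof.
move=> x1.
set c0 := (X in _ <= 1 + X^-1).
have hc : 2 <= c0.
  have : 0 <= x * (4 * x + 1 - 1) ^+ 2 by apply: mulr_ge0; [lra| apply: sqr_ge0].
  have : 0 <= (x - 1) * (4 * x + 1 + 1) ^+ 2 by apply: mulr_ge0; [lra| apply: sqr_ge0].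
  have : 0 <= (4 * x + 1 + 1) ^+ 2 / 4 by apply: divr_ge0; [apply: sqr_ge0|lra].
  rewrite /c0; nra.
have := @c0bound c0 hc.
have -> : 1 + (2 + 2 * (4 * x + 1)) / 4 + x * 1 + (0 + (x - 1) * 1) = 4 * x + 1.
  by field.
have -> : 1 + (1 + 1) + x * 0 + (1 + (x - 1) * 4) = 4 * x by ring.
have e2 : x *+ 2 = 2 * x by rewrite mulr_natl.
rewrite !e2.
suff : (4 * x + 1) ^- 2 + ((4 * x + 1) ^- 2 + ((x - 1) / (2 * x) ^+ 2 + ((4 * x) ^- 2 + x / (2 * x + 1) ^+ 2))) <= 2^-1 by lra.
have h2 : (2 : R)^-1 = 1/2 by rewrite div1r.
have b1 : (4 * x + 1) ^- 2 <= 1/25.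
  apply: invle; first by rewrite exprn_gt0 //; lra.
  nra.
have b2 : (x - 1) / (2 * x) ^+ 2 <= 1/8.
  apply: divle; first by rewrite exprn_gt0 //; lra.
  nra.
have b3 : x / (2 * x + 1) ^+ 2 <= 1/8.
  apply: divle; first by rewrite exprn_gt0 //; lra.
  nra.
have b4 : (4 * x) ^- 2 <= 1/16.
  apply: invle; first by rewrite exprn_gt0 //; lra.
  nra.
rewrite h2; lra.
Qed.

End F.

Section S.
Variable R : realType.
Local Notation C := R[i].

Definition th (n : nat) : R := pi *+ 2 / n%:R.

Lemma sin_int2pi (k : nat) : sin (k%:R * pi *+ 2) = 0 :> R.
Proof.
elim: k => [|k IH]; first by rewrite mul0r mul0rn sin0.
by rewrite -addn1 natrD mulrDl mul1r mulrnDl sinD2pi.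
Qed.

Lemma cos_int2pi (k : nat) : cos (k%:R * pi *+ 2) = 1 :> R.
Proof.
elim: k => [|k IH]; first by rewrite mul0r mul0rn cos0.
by rewrite -addn1 natrD mulrDl mul1r mulrnDl cosD2pi.
Qed.

Lemma th_mul (a j n k : nat) : (0 < n)%N -> (a * j = n * k)%N ->
  a%:R * (j%:R * th n) = k%:R * pi *+ 2.
Proof.
move=> n0 e.
have nz : (n%:R : R) != 0 by rewrite pnatr_eq0 -lt0n.
rewrite /th mulrA -natrM e natrM -mulrnAr.
by field.
Qed.

Lemma sin_th_gt0 (j n : nat) : (0 < j)%N -> (2 * j < n)%N -> 0 < sin (j%:R * th n).
Proof.
move=> j0 jn; apply: sin_gt0_pi.
have n0 : (0 < n%:R :> R) by rewrite ltr0n; lia.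
have j0' : (0 < j%:R :> R) by rewrite ltr0n.
have p0 := pi_gt0 R.
apply/andP; split.
  by rewrite /th mulr_gt0 // divr_gt0 // mulrn_wgt0.
rewrite /th mulrA ltr_pdivrMr //.
have : ((2 * j)%:R < n%:R :> R) by rewrite ltr_nat.
rewrite natrM => h; nra.
Qed.

Lemma sumcos (psi : R) M :
  sin psi * \sum_(c <- iota 1 M) (cos (c%:R * psi) *+ 2) ^+ 2
  = (M%:R *+ 2 - 1) * sin psi + sin ((2 * M)%N.+1%:R * psi).
Proof.
elim: M => [|M IH]; first by rewrite big_nil mulr0 muln0 mul1r; ring.
rewrite (_ : iota 1 M.+1 = iota 1 M ++ [:: M.+1]); last by rewrite -{1}[M.+1]addn1 iotaD /= add1n.
rewrite big_cat /= big_cons big_nil addr0 mulrDr IH.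
set A := M.+1%:R * psi.
have e1 : (2 * M)%N.+1%:R * psi = A + A - psi.
  by rewrite /A mulrSr natrM mulrSr; ring.
have e2 : (2 * M.+1)%N.+1%:R * psi = A + A + psi.
  by rewrite /A mulrSr natrM mulrSr; ring.
have h := cos2Dsin2 A.
have e : sin psi * (cos A *+ 2) ^+ 2 = 2 * sin psi + 2 * (cos A * cos A - sin A * sin A) * sin psi.
  transitivity (2 * sin psi * (cos A ^+ 2 + sin A ^+ 2) + 2 * (cos A * cos A - sin A * sin A) * sin psi).
    ring.
  by rewrite h mulr1.
rewrite e e1 e2 sinB sinD !cosD !sinD (mulrSr _ M).
rewrite cosD; ring.
Qed.


Lemma sumcsA M n j k : (0 < j)%N -> (2 * j < n)%N -> ((2 * M + 1) * j = n * k)%N ->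
  \sum_(c <- iota 1 M) (cos ((j * c)%:R * th n) *+ 2) ^+ 2 = M%:R *+ 2 - 1.
Proof.
move=> j0 jn e.
have sp := @sin_th_gt0 j n j0 jn.
set psi := j%:R * th n in sp *.
have ec c : (j * c)%:R * th n = c%:R * psi by rewrite /psi natrM; ring.
under eq_bigr => c _ do rewrite ec.
apply: (mulfI (lt0r_neq0 sp)); rewrite sumcos /psi (@th_mul _ _ _ k) ?sin_int2pi; first by ring.
  lia.
lia.
Qed.

Lemma sumcsB M n j k : (0 < j)%N -> (2 * j < n)%N -> ((2 * M + 2) * j = n * k)%N ->
  \sum_(c <- iota 1 M) (cos ((j * c)%:R * th n) *+ 2) ^+ 2 = M%:R *+ 2 - 2.
Proof.
move=> j0 jn e.
have sp := @sin_th_gt0 j n j0 jn.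
set psi := j%:R * th n in sp *.
have ec c : (j * c)%:R * th n = c%:R * psi by rewrite /psi natrM; ring.
under eq_bigr => c _ do rewrite ec.
apply: (mulfI (lt0r_neq0 sp)); rewrite sumcos.
have -> : (2 * M).+1%:R * psi = (2 * M + 2)%:R * psi - psi.
  by rewrite !natrD mulrSr; ring.
rewrite /psi (@th_mul _ _ _ k) ?sinB ?sin_int2pi ?cos_int2pi; first by ring.
  lia.
lia.
Qed.

Lemma norm2c (a b : R) : `|a +i* b| ^+ 2 = (a ^+ 2 + b ^+ 2)%:C.
Proof.
rewrite -[`|(_ +i* _)%C|]/(Num.sqrt (_ + _))%:C%C.
by rewrite -rmorphXn /= sqr_sqrtr // addr_ge0 // sqr_ge0.
Qed.


Lemma zetaX n j : zeta R n ^+ j = cos (j%:R * th n) +i* sin (j%:R * th n).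
Proof.
elim: j => [|j IH]; first by rewrite expr0 mul0r cos0 sin0.
rewrite exprS IH /zeta -/(th n); simpc.
by rewrite -[j.+1]addn1 natrD mulrDl mul1r cosD sinD; congr (_ +i* _); rewrite mulrC //; ring.
Qed.

Lemma zetaVX n j : zeta R n ^- j = cos (j%:R * th n) -i* sin (j%:R * th n).
Proof.
rewrite zetaX; apply: mulr1_eq.
simpc. rewrite -!expr2 cos2Dsin2. congr (_ +i* _). ring.
Qed.

Lemma csE n j : cs R n j = (cos (j%:R * th n) *+ 2) +i* 0.
Proof. rewrite /cs zetaVX zetaX; simpc. by rewrite mulr2n. Qed.


Definition nsq (x : C) : R := complex.Re x ^+ 2 + complex.Im x ^+ 2.

Lemma normC2 x : `|x| ^+ 2 = (nsq x)%:C.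
Proof. by case: x => a b; rewrite norm2c. Qed.

Lemma nsqM x y : nsq (x * y) = nsq x * nsq y.
Proof. case: x => a b; case: y => c d; rewrite /nsq /=; ring. Qed.

Lemma nsqR (r : R) : nsq r%:C = r ^+ 2.
Proof. by rewrite /nsq /= expr0n /= addr0. Qed.

Lemma nsq0 : nsq 0 = 0.
Proof. by rewrite /nsq /= expr0n /= addr0. Qed.

Lemma nsq1 : nsq 1 = 1.
Proof. by rewrite /nsq /= expr0n /= addr0 expr1n. Qed.

Lemma nsq_eq0 x : (nsq x == 0) = (x == 0).
Proof.
case: x => a b; rewrite /nsq /= paddr_eq0 ?sqr_ge0 // !sqrf_eq0.
by rewrite eq_complex.
Qed.

Lemma nsqV x : nsq x^-1 = (nsq x)^-1.
Proof.
have [->|x0] := eqVneq x 0; first by rewrite invr0 nsq0 invr0.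
have n0 : nsq x != 0 by rewrite nsq_eq0.
apply: (mulfI n0); rewrite -nsqM mulfV // divff //; exact: nsq1.
Qed.

Lemma nsqN x : nsq (- x) = nsq x.
Proof. case: x => a b; rewrite /nsq /=; ring. Qed.

Lemma natC n : (n%:R : C) = (n%:R : R)%:C.
Proof. by rewrite rmorph_nat. Qed.

Lemma nsq_nat n : nsq n%:R = n%:R ^+ 2.
Proof. by rewrite natC nsqR. Qed.

Lemma nsq_natB1 n : nsq (n%:R - 1) = (n%:R - 1) ^+ 2.
Proof. rewrite natC /nsq /=; simpc; ring. Qed.

Lemma nsq_natD1 n : nsq (n%:R + 1) = (n%:R + 1) ^+ 2.
Proof. rewrite natC /nsq /=; simpc; ring. Qed.

Lemma nsq_sgn n : nsq (sgn R n) = 1.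
Proof.
elim: n => [|n IH]; first by rewrite /sgn expr0 nsq1.
by rewrite /sgn exprS nsqM -/(sgn R n) IH nsqN nsq1 mulr1.
Qed.

Lemma nsq_cs n j : nsq (cs R n j) = (cos (j%:R * th n) *+ 2) ^+ 2.
Proof. by rewrite csE nsqR. Qed.

Definition cdR (col : seq C) : R := \sum_(x <- col) nsq x.

Lemma codegreeE col : codegree col = (cdR col)%:C.
Proof. by rewrite /codegree /cdR rmorph_sum; apply: eq_bigr => x _; rewrite normC2. Qed.

Lemma reduce (t : seq (seq C)) :
  (2 * \sum_(s <- t) (cdR s) ^- 2 <= 1 + (cdR (head [::] t))^-1) ->
  2 * \sum_(s <- t) (codegree s) ^- 2 <= 1 + (codegree (head [::] t))^-1.
Proof.
move=> h.
have -> : \sum_(s <- t) (codegree s) ^- 2 = (\sum_(s <- t) (cdR s) ^- 2)%:C.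
  by rewrite rmorph_sum; apply: eq_bigr => s _; rewrite codegreeE fmorphV rmorphXn.
rewrite codegreeE -fmorphV (natC 2) -rmorphM -(rmorph1 (real_complex R)) -rmorphD lecR.
exact: h.
Qed.


Lemma sum_iota_cst M (K : R) : \sum_(k <- iota 1 M) K = M%:R * K.
Proof.
elim: M => [|M IH]; first by rewrite big_nil mul0r.
rewrite (_ : iota 1 M.+1 = iota 1 M ++ [:: M.+1]); last by rewrite -{1}[M.+1]addn1 iotaD /= add1n.
by rewrite big_cat /= big_cons big_nil IH -addn1 natrD; ring.
Qed.

Lemma sum_iota_const M (F : nat -> R) K : (forall k, (0 < k <= M)%N -> F k = K) ->
  \sum_(k <- iota 1 M) F k = M%:R * K.
Proof.
move=> H; rewrite -sum_iota_cst big_seq [RHS]big_seq; apply: eq_bigr => k.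
rewrite mem_iota => hk; apply: H; lia.
Qed.

Lemma cdR_even q a f b g : cdR (col_even q a f b g) =
  nsq a + \sum_(c <- iota 1 (q %/ 2)) nsq (f c) +
  (nsq b + \sum_(c <- iota 1 ((q - 2) %/ 2)) nsq (g c)).
Proof. by rewrite /cdR /col_even big_cons big_cat big_cons /fam !big_map addrA. Qed.

Lemma cdR_m1 q a h f b g : cdR (col_m1 q a h f b g) =
  nsq a + \sum_(c <- iota 1 2) nsq (h c) + \sum_(c <- iota 1 ((q - 3) %/ 4)) nsq (f c) +
  (nsq b + \sum_(c <- iota 1 ((q - 3) %/ 4)) nsq (g c)).
Proof. by rewrite /cdR /col_m1 big_cons !big_cat big_cons /fam !big_map !addrA. Qed.

Lemma cdR_p1 q a h f b g : cdR (col_p1 q a h f b g) =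
  nsq a + \sum_(c <- iota 1 2) nsq (h c) + \sum_(c <- iota 1 ((q - 1) %/ 4)) nsq (f c) +
  (nsq b + \sum_(c <- iota 1 ((q - 5) %/ 4)) nsq (g c)).
Proof. by rewrite /cdR /col_p1 big_cons !big_cat big_cons /fam !big_map !addrA. Qed.


Lemma even_case m : (0 < m)%N ->
  2 * \sum_(s <- table_even R (2 * m)%N) (cdR s) ^- 2 <= 1 + (cdR (head [::] (table_even R (2 * m)%N)))^-1.
Proof.
move=> m0.
have e1 : ((2 * m) %/ 2 = m)%N by lia.
have e2 : ((2 * m - 2) %/ 2 = m - 1)%N by lia.
rewrite /table_even /= !big_cons big_cat /= !big_map.
rewrite !cdR_even e1 e2 /=.
have em : ((m - 1)%:R = m%:R - 1 :> R) by rewrite natrB.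
rewrite nsq1 nsq0 nsqN nsq_natB1 nsq_natD1 nsq_nat nsq1 !sum_iota_cst.
rewrite (@sum_iota_const (m - 1) _ ((m%:R *+ 2 - 1)^-2)); last first.
  move=> k hk; rewrite cdR_even e1 e2 /= nsq1 nsq0 sum_iota_cst.
  under eq_bigr do rewrite nsq_cs.
  rewrite (@sumcsA (m - 1) (2 * m - 1) k k); [|lia|lia|lia].
  congr (_ ^- 2); rewrite em; ring.
rewrite (@sum_iota_const m _ ((m%:R *+ 2 + 1)^-2)); last first.
  move=> k hk; rewrite cdR_even e1 e2 /= nsqN nsq1 nsq0 sum_iota_cst.
  under eq_bigr do rewrite nsqN nsq_cs.
  rewrite (@sumcsA m (2 * m + 1) k k); [|lia|lia|lia].
  congr (_ ^- 2); ring.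
rewrite em natrM.
apply: final_even.
have [->|h] := eqVneq m 1%N; first by rewrite eqxx.
apply/orP; right; rewrite (ler_nat R 2 m); lia.
Qed.


Lemma sqrtC_nat q : exists r : R, sqrtC (q%:R : C) = r%:C /\ r ^+ 2 = q%:R.
Proof.
set y := sqrtC _.
have y0 : 0 <= y by rewrite sqrtC_ge0 ler0n.
have iy : complex.Im y = 0 by apply: ger0_Im.
exists (complex.Re y); split.
  by move: iy; case: (y) => a b /= ->.
have : y ^+ 2 = q%:R by rewrite sqrtCK.
move: iy; case: (y) => a b /= -> h.
apply: (@complexI R); rewrite rmorphXn /= h natC //.
Qed.

Lemma sgnC n : sgn R n = ((-1) ^+ n : R)%:C.
Proof. by rewrite /sgn rmorphXn rmorphN1. Qed.

Lemma sgn_sqr n : ((-1) ^+ n : R) ^+ 2 = 1.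
Proof. by rewrite -exprM mulnC exprM sqrrN expr1n expr1n. Qed.

Lemma sgn_mul_sqr n (r : R) : ((-1) ^+ n * r) ^+ 2 = r ^+ 2.
Proof. by rewrite exprMn sgn_sqr mul1r. Qed.

Lemma nsq_Dm1 (a b : R) : nsq (-1 + 'i * a%:C * b%:C) = 1 + (a * b) ^+ 2.
Proof. rewrite /nsq /=; simpc; ring. Qed.

Lemma nsq_Dp1 (a b : R) : nsq (1 + a%:C * b%:C) = (1 + a * b) ^+ 2.
Proof. rewrite /nsq /=; simpc; ring. Qed.

Lemma nsq_half x : nsq (x / 2) = nsq x / 4.
Proof. by rewrite nsqM nsqV nsq_nat; congr (_ / _); ring. Qed.


Lemma m1_case m :
  2 * \sum_(s <- table_m1 R (4 * m + 3)%N) (cdR s) ^- 2 <= 1 + (cdR (head [::] (table_m1 R (4 * m + 3)%N)))^-1.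
Proof.
have e1 : ((4 * m + 3 - 3) %/ 4 = m)%N by lia.
have e2 : ((4 * m + 3 + 1) %/ 4 = m + 1)%N by lia.
have [r [hr r2]] := sqrtC_nat (4 * m + 3).
rewrite /table_m1 /= e1 e2 !big_cons !big_cat /= !big_map big_cons big_nil addr0.
rewrite !cdR_m1 e1 /=.
rewrite nsq1 nsq0 nsqN nsq_half nsq_natB1 nsq_natD1 nsq_nat nsq1 !sum_iota_cst.
rewrite !big_cons !big_nil !addr0 nsq_sgn.
rewrite (@sum_iota_const m (fun c => nsq (- (2 * sgn R c))) 4); last first.
  by move=> c _; rewrite nsqN nsqM nsq_nat nsq_sgn mulr1; ring.
rewrite (@sum_iota_const m _ ((m%:R *+ 2 + 1)^-2)); last first.
  move=> k hk; rewrite cdR_m1 e1 /= nsq1 nsq0 !big_cons big_nil sum_iota_cst.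
  under eq_bigr do rewrite nsq_cs.
  rewrite (@sumcsA m (4 * m + 3 - 1) (2 * k) k); [|lia|lia|lia].
  congr (_ ^- 2); ring.
rewrite (@sum_iota_const m _ ((m%:R *+ 2 + 2)^-2)); last first.
  move=> k hk; rewrite cdR_m1 e1 /= nsq1 nsq0 nsqN nsq1 !big_cons big_nil nsq_sgn sum_iota_cst.
  under eq_bigr do rewrite nsqN nsq_cs.
  rewrite (@sumcsB m (4 * m + 3 + 1) (2 * k) k); [|lia|lia|lia].
  congr (_ ^- 2); ring.
rewrite hr !sgnC !nsq_half !nsq_Dm1 !sgn_mul_sqr r2.
rewrite natrD natrM.
apply: final_m1.
have [->|h] := eqVneq m 0%N; first by rewrite eqxx.
apply/orP; right; rewrite (ler_nat R 1 m); lia.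
Qed.


Lemma D_p1_sum k (r : R) : nsq ((1 + sgn R (k + 1) * r%:C) / 2) + nsq ((1 + sgn R (k + 2) * r%:C) / 2)
  = (2 + 2 * r ^+ 2) / 4.
Proof.
rewrite !sgnC !nsq_half !nsq_Dp1 -mulrDl; congr (_ / 4).
rewrite (addnS k 1) (exprS _ (k + 1)); have hs := sgn_sqr (k + 1); move: hs.
set s := (-1) ^+ (k + 1) => hs.
transitivity (2 + 2 * s ^+ 2 * r ^+ 2); first by ring.
by rewrite hs; ring.
Qed.

Lemma p1_case m : (0 < m)%N ->
  2 * \sum_(s <- table_p1 R (4 * m + 1)%N) (cdR s) ^- 2 <= 1 + (cdR (head [::] (table_p1 R (4 * m + 1)%N)))^-1.
Proof.
move=> m0.
have e1 : ((4 * m + 1 - 1) %/ 4 = m)%N by lia.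
have e2 : ((4 * m + 1 - 5) %/ 4 = m - 1)%N by lia.
have em : ((m - 1)%:R = m%:R - 1 :> R) by rewrite natrB.
have [r [hr r2]] := sqrtC_nat (4 * m + 1).
rewrite /table_p1 /= e1 e2 !big_cons !big_cat /= !big_map big_cons big_map.
rewrite !cdR_p1 e1 e2 /=.
rewrite nsq1 nsq0 nsqN nsq_half nsq_natB1 nsq_natD1 nsq_nat nsq1 !sum_iota_cst.
rewrite !big_cons !big_nil !addr0 nsq_sgn hr !D_p1_sum r2.
rewrite (@sum_iota_const (m - 1) (fun c => nsq (2 * sgn R c)) 4); last first.
  by move=> c _; rewrite nsqM nsq_nat nsq_sgn mulr1; ring.
rewrite (@sum_iota_const (m - 1) _ ((m%:R *+ 2)^-2)); last first.
  move=> k hk; rewrite cdR_p1 e1 e2 /= nsq1 nsq0 !big_cons big_nil nsq_sgn sum_iota_cst.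
  under eq_bigr do rewrite nsq_cs.
  rewrite (@sumcsB (m - 1) (4 * m + 1 - 1) (2 * k) k); [|lia|lia|lia].
  congr (_ ^- 2); rewrite em; ring.
rewrite (@sum_iota_const m _ ((m%:R *+ 2 + 1)^-2)); last first.
  move=> k hk; rewrite cdR_p1 e1 e2 /= nsq1 nsq0 nsqN nsq1 !big_cons big_nil sum_iota_cst.
  under eq_bigr do rewrite nsqN nsq_cs.
  rewrite (@sumcsA m (4 * m + 1 + 1) (2 * k) k); [|lia|lia|lia].
  congr (_ ^- 2); ring.
rewrite em natrD natrM.
apply: final_p1; rewrite (ler_nat R 1 m); lia.
Qed.

End S.

Local Close Scope complex_scope.

Theorem proposition7p5 (R : realType) (q : nat) (hq : (2 <= q)%N) :
  2 * \sum_(s <- table R q) (codegree s) ^- 2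
    <= 1 + (codegree (head [::] (table R q)))^-1.
Proof.
apply: reduce; rewrite /table.
case: (boolP (odd q)) => hodd /=.
  case: (boolP (q %% 4 == 3)%N) => h4.
    have -> : q = (4 * (q %/ 4) + 3)%N by move/eqP: h4; lia.
    exact: m1_case.
  have -> : q = (4 * (q %/ 4) + 1)%N by move: h4 hodd hq; lia.
  apply: p1_case; move: h4 hodd hq; lia.
have -> : q = (2 * (q %/ 2))%N by move: hodd; lia.
apply: even_case; move: hodd hq; lia.
Qed.
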